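(* Let $s_1\ge 1$ and $s_2\ge 0$ be integers, and for integers $N$ let $$f_{s_1,s_2}(N)=\binom{s_2}{N}\sum_{i}\binom{s_1}{i}\binom{s_1}{N-i}\binom{N}{i}.$$ Then there is an integer $g(s_1,s_2)$ such that $f_{s_1,s_2}(N)$ is a non-decreasing function of $N$ for integers $N\le g(s_1,s_2)$ and a non-increasing function of $N$ for integers $N\ge g(s_1,s_2)$. Moreover, $$g(s_1,s_2)=\left\lfloor 2s_1+s_2+\tfrac32-\sqrt{4s_1^2+4s_1+(s_2+\tfrac12)^2}\right\rfloor+\delta$$ with $\delta\in\{0,1\}$.
   Context: Binomial coefficients $\binom{a}{b}$ are taken to be $0$ when $b<0$ or $b>a$; the sum is over all integers $i$. If $f_{s_1,s_2}$ attains equal maxima at two consecutive integers $N$ and $N+1$, either may be taken as $g(s_1,s_2)$. $\lfloor\cdot\rfloor$ denotes the integer part. *)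

(* Defs.v *)
From HB Require Import structures.
From mathcomp Require Import all_boot all_order all_algebra.
From mathcomp Require Import reals.
Set Implicit Arguments. Unset Strict Implicit. Unset Printing Implicit Defensive.
Import Order.TTheory GRing.Theory Num.Theory.

Definition binZ (a b : int) : nat :=
  match a, b with
  | Posz m, Posz k => 'C(m, k)
  | _, _ => 0
  end.

(* f_{s1,s2}(N) = C(s2,N) * sum_i C(s1,i) C(s1,N-i) C(N,i).
   The sum over all integers i reduces to 0 <= i <= s1, since C(s1,i) = 0 otherwise. *)
Definition fss (s1 s2 : nat) (N : int) : nat :=
  binZ s2 N * \sum_(0 <= i < s1.+1)
     ('C(s1, i) * binZ s1 (N - i%:Z)%R * binZ N i).

(* Main.v *)
Require Import Defs.
From HB Require Import structures.
From mathcomp Require Import all_boot all_order all_algebra.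
From mathcomp Require Import reals.
From mathcomp Require Import zify ring lra.
Import Order.TTheory GRing.Theory Num.Theory.
Set Implicit Arguments. Unset Strict Implicit. Unset Printing Implicit Defensive.

Section Comb.
Local Open Scope ring_scope.

Definition aa (s n i : nat) : nat := ('C(s, i) * 'C(s, n - i))%N.

Lemma aa_split s n i : (i <= n)%N ->
  ((2 * s - n) * aa s n i = i.+1 * aa s n.+1 i.+1 + (n.+1 - i) * aa s n.+1 i)%N.
Proof.
move=> lein; rewrite /aa.
have -> : (n.+1 - i.+1 = n - i)%N by rewrite subSS.
have e1 : (i.+1 * 'C(s, i.+1) = (s - i) * 'C(s, i))%N by rewrite mul_bin_left.
have e2 : ((n.+1 - i) * 'C(s, n.+1 - i) = (s - (n - i)) * 'C(s, n - i))%N.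
  by rewrite subSn // mul_bin_left.
case: (leqP i s) => his; last by rewrite (bin_small his) !mul0n !muln0 (bin_small (leq_trans his (leqnSn _))) ?mul0n ?muln0 addn0.
case: (leqP (n - i) s) => hnis; last first.
  have h2 : (s < n.+1 - i)%N by rewrite subSn //; apply: (leq_trans hnis).
  by rewrite (bin_small hnis) (bin_small h2) !muln0 addn0.
have -> : (i.+1 * ('C(s, i.+1) * 'C(s, n - i)) = (s - i) * 'C(s, i) * 'C(s, n - i))%N by rewrite mulnA e1.
have -> : ((n.+1 - i) * ('C(s, i) * 'C(s, n.+1 - i)) = 'C(s, i) * ((s - (n - i)) * 'C(s, n - i)))%N by rewrite mulnCA e2.
have -> : (2 * s - n = (s - i) + (s - (n - i)))%N by lia.
ring.
Qed.

Lemma LS s n (phi : nat -> int) :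
  (2 * s - n)%N%:Z * \sum_(0 <= i < n.+1) phi i * (aa s n i)%:Z
  = \sum_(0 <= i < n.+2) ((i%:Z) * phi i.-1 + ((n.+1 - i)%N%:Z) * phi i) * (aa s n.+1 i)%:Z.
Proof.
rewrite big_distrr /=.
transitivity (\sum_(0 <= i < n.+1) (phi i * (i.+1 * aa s n.+1 i.+1)%N%:Z
                                   + phi i * ((n.+1 - i) * aa s n.+1 i)%N%:Z)).
  apply: eq_big_nat => i /andP[_ hi].
  by rewrite mulrCA -PoszM aa_split // PoszD mulrDr.
rewrite big_split /=.
under [RHS]eq_bigr do rewrite mulrDl.
rewrite big_split /=.
congr (_ + _).
  rewrite [RHS]big_nat_recl // /= mul0r mul0r add0r.
  apply: eq_bigr => i _; rewrite PoszM /=; ring.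
rewrite [RHS]big_nat_recr //= subnn mul0r mul0r addr0.
by apply: eq_bigr => i _; rewrite PoszM; ring.
Qed.

Definition hZ s n : int := \sum_(0 <= i < n.+1) (aa s n i * 'C(n, i))%N%:Z.

Lemma term_id m i : (i <= m.+1)%N ->
  (i * (m.+1 * 'C(m, i.-1)) + (m.+1 - i) * (m.+1 * 'C(m, i))
   = (i ^ 2 + (m.+1 - i) ^ 2) * 'C(m.+1, i))%N.
Proof.
move=> hi.
have e2 : (m.+1 * 'C(m, i) = (m.+1 - i) * 'C(m.+1, i))%N by rewrite -mul_bin_down.
case: i hi e2 => [|j] hj e2.
  by rewrite mul0n add0n !bin0 subn0 /=; ring.
have e1 : (m.+1 * 'C(m, j) = j.+1 * 'C(m.+1, j.+1))%N by rewrite -mul_bin_diag.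
rewrite /= e1 e2; ring.
Qed.

Lemma Id1 s m :
  (m.+1 * (2 * s - m))%N%:Z * hZ s m
  = \sum_(0 <= i < m.+2) ((i ^ 2 + (m.+1 - i) ^ 2) * (aa s m.+1 i * 'C(m.+1, i)))%N%:Z.
Proof.
transitivity ((2 * s - m)%N%:Z * \sum_(0 <= i < m.+1) (m.+1 * 'C(m, i))%N%:Z * (aa s m i)%:Z).
  rewrite /hZ !big_distrr /=; apply: eq_bigr => i _.
  rewrite !PoszM; ring.
rewrite LS; apply: eq_big_nat => i /andP[_ hi].
rewrite mulrDl -!PoszM -PoszD; congr Posz.
rewrite [RHS]mulnCA -term_id //; ring.
Qed.

Definition tt (n i : nat) : int := (n%:Z - 2 * i%:Z) ^+ 2.
Definition SA s n : int := \sum_(0 <= i < n.+1) (aa s n i)%:Z.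
Definition TA s n : int := \sum_(0 <= i < n.+1) tt n i * (aa s n i)%:Z.

Lemma SA_step s n : (2 * s - n)%N%:Z * SA s n = n.+1%:Z * SA s n.+1.
Proof.
have := LS s n (fun _ => 1).
under eq_bigr do rewrite mul1r.
move=> ->; rewrite /SA big_distrr /=; apply: eq_big_nat => i /andP[_ hi].
rewrite !mulr1 -PoszD subnKC //.
Qed.

Lemma TA_step s n :
  (2 * s - n)%N%:Z * TA s n = (n%:Z - 1) * TA s n.+1 + n.+1%:Z * SA s n.+1.
Proof.
rewrite /TA LS /SA !big_distrr -big_split /=; apply: eq_big_nat => i /andP[_ hi].
rewrite /tt; case: i hi => [|j] hj /=.
  rewrite subn0; ring.
rewrite subSS -subzn; last by rewrite -ltnS.
ring.
Qed.

Lemma SA_ge0 s n : 0 <= SA s n.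
Proof. by apply: sumr_ge0 => i _. Qed.

Lemma TA_top s : TA s (2 * s) = 0.
Proof.
rewrite /TA big1 // => i _.
rewrite /aa /tt.
case: (ltngtP i s) => h.
- rewrite (@bin_small s (2 * s - i)); first by rewrite muln0 mulr0.
  lia.
- by rewrite (bin_small h) mul0n mulr0.
- rewrite h; have -> : (2 * s)%N%:Z - 2 * s%:Z = 0 by lia.
  by rewrite expr0n mul0r.
Qed.

Lemma Hyp_aux s k : (k <= 2 * s)%N ->
  TA s (2 * s - k) <= k%:Z * SA s (2 * s - k).
Proof.
elim: k => [|k IH] hk.
  by rewrite subn0 TA_top mul0r.
set n := (2 * s - k.+1)%N.
have hn1 : (2 * s - k = n.+1)%N by rewrite /n; lia.
have hk2 : (2 * s - n = k.+1)%N by rewrite /n; lia.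
have IH' := IH (ltnW hk); rewrite hn1 in IH'.
case: n hn1 hk2 IH' => [|n] hn1 hk2 IH'.
  rewrite /TA big_nat1 /tt /= mulr0 subr0 expr0n mul0r.
  by apply: mulr_ge0 => //; apply: SA_ge0.
have e1 := SA_step s n.+1; rewrite hk2 in e1.
have e2 := TA_step s n.+1; rewrite hk2 in e2.
have h0 := SA_ge0 s n.+2.
have hkpos : (0 < k.+1%:Z) by [].
rewrite -(ler_pM2l hkpos) e2 mulrA -mulrA e1.
have -> : (n.+1%:Z - 1) = n%:Z by rewrite -addn1 PoszD addrK.
move: IH' h0; generalize (TA s n.+2) (SA s n.+2) => T S h1 h2.
have h3 : n%:Z * T <= n%:Z * (k%:Z * S) by apply: ler_wpM2l.
have e : (k.+1%:Z * (n.+2%:Z * S)) = n%:Z * (k%:Z * S) + n.+2%:Z * S + 2 * (k%:Z * S).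
  by rewrite -[k.+1]addn1 -[n.+2]addn2 !PoszD; ring.
rewrite e; apply: (le_trans (lerD h3 (lexx _))); rewrite lerDl.
by apply: mulr_ge0 => //; apply: mulr_ge0.
Qed.


Lemma bin_up n k : (2 * k.+1 <= n)%N -> ('C(n, k) <= 'C(n, k.+1))%N.
Proof.
move=> h.
have e := mul_bin_left n k.
rewrite -(@leq_pmul2l k.+1) // e leq_mul2r; apply/orP; right; lia.
Qed.

Lemma bin_mono n k k' : (k <= k')%N -> (2 * k' <= n)%N -> ('C(n, k) <= 'C(n, k'))%N.
Proof.
move=> hk; rewrite -(subnKC hk); elim: (k' - k)%N => [|d IH] h; first by rewrite addn0.
rewrite addnS; apply: (leq_trans (IH _)); first lia.
apply: bin_up; lia.
Qed.

Definition dd n i := minn i (n - i)%N.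

Lemma bin_dd n i : (i <= n)%N -> 'C(n, i) = 'C(n, dd n i).
Proof.
move=> h; rewrite /dd; case: (leqP i (n - i)) => hh.
  by [].
by rewrite bin_sub.
Qed.

Lemma tt_dd n i : (i <= n)%N -> tt n i = ((n - 2 * dd n i)%N%:Z) ^+ 2.
Proof.
move=> h; rewrite /tt /dd; case: (leqP i (n - i)) => hh.
  rewrite -subzn; last lia.
  by rewrite PoszM.
rewrite -subzn; last lia.
rewrite PoszM -subzn //.
have -> : n%:Z - 2%:Z * (n%:Z - i%:Z) = - (n%:Z - 2 * i%:Z) by ring.
by rewrite sqrrN.
Qed.

Lemma bin_unimod n i j : tt n i <= tt n j -> ('C(n, j) <= 'C(n, i))%N.
Proof.
move=> h.
case: (leqP j n) => hj; last by rewrite bin_small.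
case: (leqP i n) => hi; last first.
  exfalso; move: h; rewrite (tt_dd hj) /tt.
  have h1 : (n.+2)%:Z ^+ 2 <= (n%:Z - 2 * i%:Z) ^+ 2.
    by rewrite -[X in _ <= X]sqrrN ler_sqr ?nnegrE //; lia.
  have h2 : ((n - 2 * dd n j)%N%:Z) ^+ 2 < (n.+2)%:Z ^+ 2.
    by rewrite ltr_sqr ?nnegrE //; lia.
  move=> h3; have := lt_le_trans h2 (le_trans h1 h3); by rewrite ltxx.
rewrite (bin_dd hi) (bin_dd hj); apply: bin_mono; last by rewrite /dd; lia.
move: h; rewrite (tt_dd hi) (tt_dd hj).
rewrite ler_sqr ?nnegrE // lez_nat /dd; lia.
Qed.

Lemma dsum (r : seq nat) (f h : nat -> int) :
  \sum_(i <- r) \sum_(j <- r) f i * h j = (\sum_(i <- r) f i) * (\sum_(j <- r) h j).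
Proof. by rewrite big_distrl; apply: eq_bigr => i _; rewrite big_distrr. Qed.

Lemma cheb (r : seq nat) (a g t : nat -> int) :
  (forall i, 0 <= a i) -> (forall i j, (g i - g j) * (t i - t j) <= 0) ->
  (\sum_(i <- r) a i * g i * t i) * (\sum_(i <- r) a i)
  <= (\sum_(i <- r) a i * g i) * (\sum_(i <- r) a i * t i).
Proof.
move=> ha hgt.
have key : \sum_(i <- r) \sum_(j <- r) a i * a j * ((g i - g j) * (t i - t j)) <= 0.
  apply: sumr_le0 => i _; apply: sumr_le0 => j _.
  by apply: mulr_ge0_le0 => //; apply: mulr_ge0.
have e : \sum_(i <- r) \sum_(j <- r) a i * a j * ((g i - g j) * (t i - t j))
   = \sum_(i <- r) \sum_(j <- r) (a i * g i * t i) * a j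
   + \sum_(i <- r) \sum_(j <- r) a i * (a j * g j * t j)
   - \sum_(i <- r) \sum_(j <- r) (a i * g i) * (a j * t j)
   - \sum_(i <- r) \sum_(j <- r) (a i * t i) * (a j * g j).
  rewrite -!big_split -!sumrB /=; apply: eq_bigr => i _.
  rewrite -!big_split -!sumrB /=; apply: eq_bigr => j _; ring.
move: key; rewrite e !dsum.
set X := \sum_(i <- r) a i * g i * t i.
set A := \sum_(i <- r) a i.
set Z := \sum_(i <- r) a i * g i.
set U := \sum_(i <- r) a i * t i.

move=> h.
have : X * A + A * X - Z * U - U * Z = 2 * (X * A - Z * U) by ring.
move=> e2; rewrite e2 in h.
rewrite -subr_le0.
have h2 : (0 : int) < 2 by [].
by rewrite -(pmulr_rle0 _ h2).
Qed.

Lemma PoszX2 n : Posz (n ^ 2) = n%:Z ^+ 2.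
Proof. by rewrite -natz natrX natz. Qed.

Lemma Posz_sum (r : seq nat) (F : nat -> nat) :
  (\sum_(i <- r) F i)%N%:Z = \sum_(i <- r) (F i)%:Z.
Proof. exact: (big_morph Posz PoszD (erefl (Posz 0))). Qed.

Definition hN s n : nat := \sum_(0 <= i < n.+1) aa s n i * 'C(n, i).

Lemma hZ_hN s n : hZ s n = (hN s n)%:Z.
Proof. by rewrite /hZ /hN Posz_sum. Qed.

Definition TW s n : int := \sum_(0 <= i < n.+1) tt n i * (aa s n i * 'C(n, i))%N%:Z.

Lemma TW_ge0 s n : 0 <= TW s n.
Proof. by apply: sumr_ge0 => i _; apply: mulr_ge0 => //; rewrite /tt sqr_ge0. Qed.

Lemma Id2 s m :
  2 * ((m.+1 * (2 * s - m))%N%:Z * hZ s m) = (m.+1%:Z ^+ 2) * hZ s m.+1 + TW s m.+1.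
Proof.
rewrite Id1 big_distrr /hZ /TW big_distrr -big_split /=.
apply: eq_big_nat => i /andP[_ hi].
rewrite PoszM PoszD !PoszX2 -subzn // /tt PoszM; ring.
Qed.

Lemma SA_gt0 s n : (n <= 2 * s)%N -> 0 < SA s n.
Proof.
move=> hn; set i0 := (n - minn n s)%N.
have hi0 : (i0 <= n)%N by rewrite /i0 leq_subr.
have hpos : (0 < aa s n i0)%N.
  rewrite /aa muln_gt0 !bin_gt0; apply/andP; split; rewrite /i0; lia.
rewrite /SA (@big_cat_nat _ _ _ i0) //=; last by apply: (leq_trans hi0).
rewrite [\sum_(i0 <= i < n.+1) _]big_ltn ?ltnS //=.
have h1 : 0 <= \sum_(0 <= i < i0) (aa s n i)%:Z by apply: sumr_ge0.
have h2 : 0 <= \sum_(i0.+1 <= i < n.+1) (aa s n i)%:Z by apply: sumr_ge0.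
have h3 : 0 < (aa s n i0)%:Z by rewrite ltz_nat.
by apply: (lt_le_trans h3); rewrite addrCA lerDl addr_ge0.
Qed.

Lemma Var s n : (n <= 2 * s)%N -> TW s n <= (2 * s - n)%N%:Z * hZ s n.
Proof.
move=> hn.
have hc := @cheb (index_iota 0 n.+1) (fun i => (aa s n i)%:Z) (fun i => ('C(n, i))%:Z) (tt n).
have hc' : forall i j, ((('C(n, i))%:Z - ('C(n, j))%:Z) * (tt n i - tt n j)) <= 0.
  move=> i j; case: (lerP (tt n i) (tt n j)) => h.
    apply: mulr_ge0_le0; first by rewrite subr_ge0 lez_nat; apply: bin_unimod.
    by rewrite subr_le0.
  apply: mulr_le0_ge0; last by rewrite subr_ge0 ltW.
  by rewrite subr_le0 lez_nat; apply: bin_unimod; rewrite ltW.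
have := hc (fun i => leq0n _) hc'.
have eX : \sum_(i <- index_iota 0 n.+1) (aa s n i)%:Z * ('C(n, i))%:Z * tt n i = TW s n.
  by rewrite /TW; apply: eq_bigr => i _; rewrite PoszM; ring.
have eZ : \sum_(i <- index_iota 0 n.+1) (aa s n i)%:Z * ('C(n, i))%:Z = hZ s n.
  by rewrite /hZ; apply: eq_bigr => i _; rewrite PoszM.
have eU : \sum_(i <- index_iota 0 n.+1) (aa s n i)%:Z * tt n i = TA s n.
  by rewrite /TA; apply: eq_bigr => i _; rewrite mulrC.
rewrite eX eZ eU -/(SA s n) => h.
have hH := Hyp_aux (leq_subr n (2 * s)).
rewrite subKn // in hH.
have hZ0 : 0 <= hZ s n by apply: sumr_ge0.
have h2 : hZ s n * TA s n <= hZ s n * ((2 * s - n)%N%:Z * SA s n) by apply: ler_wpM2l.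
have hS := SA_gt0 hn.
rewrite -(ler_pM2r hS); apply: (le_trans h); rewrite (le_trans h2) //.
by rewrite mulrCA mulrA.
Qed.

Lemma Vn s m : (m.+1 * hN s m.+1 <= 2 * (2 * s - m) * hN s m)%N.
Proof.
have e := Id2 s m; have hT := TW_ge0 s m.+1.
rewrite !hZ_hN in e.
have h : m.+1%:Z ^+ 2 * (hN s m.+1)%:Z <= 2 * ((m.+1 * (2 * s - m))%N%:Z * (hN s m)%:Z).
  by rewrite e lerDl.
have h' : ((m.+1 * (m.+1 * hN s m.+1))%N%:Z <= (m.+1 * (2 * (2 * s - m) * hN s m))%N%:Z).
  have -> : ((m.+1 * (m.+1 * hN s m.+1))%N%:Z) = m.+1%:Z ^+ 2 * (hN s m.+1)%:Z by rewrite !PoszM; ring.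
  have -> : ((m.+1 * (2 * (2 * s - m) * hN s m))%N%:Z) = 2 * ((m.+1 * (2 * s - m))%N%:Z * (hN s m)%:Z) by rewrite !PoszM; ring.
  exact: h.
by rewrite lez_nat leq_pmul2l in h'.
Qed.

Lemma Ln s m : (m < 2 * s)%N ->
  (2 * m.+1 * (2 * s - m) * hN s m <= (m ^ 2 + m + 2 * s) * hN s m.+1)%N.
Proof.
move=> hm.
have e := Id2 s m; have hV := Var hm.
rewrite !hZ_hN in e hV.
rewrite -lez_nat.
have -> : ((2 * m.+1 * (2 * s - m) * hN s m)%N%:Z) = 2 * ((m.+1 * (2 * s - m))%N%:Z * (hN s m)%:Z).
  by rewrite !PoszM; ring.
rewrite e.
have -> : ((m ^ 2 + m + 2 * s) * hN s m.+1)%N%:Z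
   = m.+1%:Z ^+ 2 * (hN s m.+1)%:Z + (2 * s - m.+1)%N%:Z * (hN s m.+1)%:Z.
  by rewrite -subzn // !PoszM !PoszD PoszX2 -[m.+1]addn1 PoszD; ring.
by rewrite lerD2l.
Qed.

End Comb.

Lemma sum_ext_range (F : nat -> nat) a b : (forall i, (a <= i)%N -> F i = 0%N) ->
  (\sum_(0 <= i < a) F i = \sum_(0 <= i < a + b) F i)%N.
Proof.
move=> H; rewrite (@big_cat_nat _ _ _ a 0 (a + b)) ?leq_addr //=.
rewrite [X in _ = (_ + X)%N]big1_seq ?addn0 // => i /andP[_].
by rewrite mem_index_iota => /andP[h _]; apply: H.
Qed.

Lemma fss_pos s1 s2 n : fss s1 s2 (Posz n) = ('C(s2, n) * hN s1 n)%N.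
Proof.
rewrite /fss /=; congr (_ * _)%N.
transitivity (\sum_(0 <= i < s1.+1) aa s1 n i * 'C(n, i))%N.
  apply: eq_bigr => i _; rewrite /aa.
  case: (leqP i n) => h.
    by rewrite subzn //=.
  by rewrite /= (bin_small h) !muln0.
rewrite /hN.
have H : forall i, (s1.+1 <= i)%N -> (aa s1 n i * 'C(n, i) = 0)%N.
  by move=> i hi; rewrite /aa bin_small.
have H' : forall i, (n.+1 <= i)%N -> (aa s1 n i * 'C(n, i) = 0)%N.
  by move=> i hi; rewrite bin_small // muln0.
rewrite (sum_ext_range n H) (sum_ext_range s1 H').
by rewrite addSn addnC addSn.
Qed.

Lemma fss_neg s1 s2 k : fss s1 s2 (Negz k) = 0%N.
Proof. by []. Qed.

Lemma stepA s1 s2 n : (n < s2)%N -> (n < 2 * s1)%N ->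
  (n ^ 2 + n + 2 * s1 <= 2 * (2 * s1 - n) * (s2 - n))%N ->
  (fss s1 s2 n <= fss s1 s2 n.+1)%N.
Proof.
move=> hs2 h2 hQ; rewrite !fss_pos.
have e : (n.+1 * 'C(s2, n.+1) = (s2 - n) * 'C(s2, n))%N by rewrite mul_bin_left.
have hL := Ln h2.
set c0 := 'C(s2, n) in e *; set c1 := 'C(s2, n.+1) in e *.
set h0 := hN s1 n in hL *; set h1 := hN s1 n.+1 in hL *.
have hk : (0 < n.+1 * (2 * (2 * s1 - n)))%N by rewrite muln_gt0 /=; lia.
rewrite -(leq_pmul2l hk).
apply: (@leq_trans (c0 * ((n ^ 2 + n + 2 * s1) * h1))).
  have -> : (n.+1 * (2 * (2 * s1 - n)) * (c0 * h0) = c0 * (2 * n.+1 * (2 * s1 - n) * h0))%N by ring.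
  by rewrite leq_mul2l hL orbT.
apply: (@leq_trans (c0 * (2 * (2 * s1 - n) * (s2 - n) * h1))).
  by rewrite leq_mul2l leq_mul2r hQ !orbT.
apply: eq_leq.
have -> : (n.+1 * (2 * (2 * s1 - n)) * (c1 * h1) = 2 * (2 * s1 - n) * (n.+1 * c1) * h1)%N by ring.
rewrite e; ring.
Qed.

Lemma stepB s1 s2 n : (n < s2)%N ->
  (2 * (2 * s1 - n) * (s2 - n) <= n.+1 ^ 2)%N ->
  (fss s1 s2 n.+1 <= fss s1 s2 n)%N.
Proof.
move=> hs2 hQ; rewrite !fss_pos.
have e : (n.+1 * 'C(s2, n.+1) = (s2 - n) * 'C(s2, n))%N by rewrite mul_bin_left.
have hV := Vn s1 n.
set c0 := 'C(s2, n) in e *; set c1 := 'C(s2, n.+1) in e *.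
set h0 := hN s1 n in hV *; set h1 := hN s1 n.+1 in hV *.
have hk : (0 < n.+1 ^ 2)%N by rewrite expn_gt0.
rewrite -(leq_pmul2l hk).
apply: (@leq_trans ((s2 - n) * c0 * (2 * (2 * s1 - n) * h0))).
  have -> : (n.+1 ^ 2 * (c1 * h1) = (n.+1 * c1) * (n.+1 * h1))%N by ring.
  by rewrite e leq_mul2l hV orbT.
apply: (@leq_trans (c0 * (n.+1 ^ 2) * h0)).
  have -> : ((s2 - n) * c0 * (2 * (2 * s1 - n) * h0) = c0 * (2 * (2 * s1 - n) * (s2 - n)) * h0)%N by ring.
  by rewrite leq_mul2r leq_mul2l hQ !orbT.
by apply: eq_leq; ring.
Qed.

Lemma fss_big s1 s2 n : (s2 <= n)%N -> fss s1 s2 n.+1 = 0%N.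
Proof. by move=> h; rewrite fss_pos bin_small. Qed.

Section Reals.
Local Open Scope ring_scope.

Definition xval (R : realType) (s t : nat) : R :=
  2 * s%:R + t%:R + 3 / 2 - Num.sqrt (4 * s%:R ^+ 2 + 4 * s%:R + (t%:R + 1 / 2) ^+ 2).

Lemma sq_lt (R : realType) (a b : R) : 0 <= b -> a ^+ 2 < b ^+ 2 -> a < b.
Proof. move=> hb h. nra. Qed.

Definition Dv (R : realType) (s t : nat) : R := 4 * s%:R ^+ 2 + 4 * s%:R + (t%:R + 1 / 2) ^+ 2.
Definition cv (R : realType) (s t : nat) : R := 2 * s%:R + t%:R + 3 / 2.

Lemma D_ge0 (R : realType) (s t : nat) : 0 <= Dv R s t.
Proof. rewrite /Dv; have h0 : (0 : R) <= s%:R by []; have h1 : (0 : R) <= t%:R by []; nra. Qed.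

Lemma xvalE (R : realType) (s t : nat) : xval R s t = cv R s t - Num.sqrt (Dv R s t).
Proof. by []. Qed.

Lemma sqrtD_facts (R : realType) (s t : nat) : 0 <= Num.sqrt (Dv R s t) /\ Num.sqrt (Dv R s t) ^+ 2 = Dv R s t.
Proof. by split; [apply: sqrtr_ge0 | apply: sqr_sqrtr; apply: D_ge0]. Qed.

Lemma RA (R : realType) (s t : nat) (hs1 : (0 < s)%N) (n : nat) : (n.+1)%:R <= xval R s t ->
  [/\ (n < t)%N, (n < 2 * s)%N & (n ^ 2 + n + 2 * s <= 2 * (2 * s - n) * (t - n))%N].
Proof.
rewrite xvalE => h.
have [hy hy2] := sqrtD_facts R s t; set y := Num.sqrt (Dv R s t) in h hy hy2.
have hs : (0 : R) <= s%:R by [].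
have ht : (0 : R) <= t%:R by [].
have hn : (0 : R) <= n%:R by [].
move: h; rewrite /cv -natr1 => h.
have hD : Dv R s t = 4 * s%:R ^+ 2 + 4 * s%:R + (t%:R + 1 / 2) ^+ 2 by [].
have hs1' : (1 : R) <= s%:R by rewrite ler1n.
have y1 : t%:R + 1 / 2 < y by apply: sq_lt => //; rewrite hy2 hD; nra.
have y2 : 2 * s%:R + 1 / 2 < y by apply: sq_lt => //; rewrite hy2 hD; nra.
have hq : Dv R s t <= (2 * s%:R + t%:R + 3 / 2 - (n%:R + 1)) ^+ 2 by rewrite -hy2; nra.
have hnt : (n < t)%N by rewrite -(ltr_nat R); lra.
have hns : (n < 2 * s)%N by rewrite -(ltr_nat R) natrM; lra.
split => //.
rewrite -(ler_nat R) !natrD !natrM !natrB ?(ltnW hnt) ?(ltnW hns) // ?natrX ?natrM. nra.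
Qed.

Lemma RB (R : realType) (s t : nat) (n : nat) : xval R s t < n%:R -> (n < t)%N ->
  (2 * (2 * s - n) * (t - n) <= n.+1 ^ 2)%N.
Proof.
rewrite xvalE => h hnt.
case: (leqP (2 * s) n) => hns.
  by have -> : (2 * s - n = 0)%N by apply/eqP; rewrite subn_eq0.
have [hy hy2] := sqrtD_facts R s t; set y := Num.sqrt (Dv R s t) in h hy hy2.
have hs : (0 : R) <= s%:R by [].
have ht : (0 : R) <= t%:R by [].
have hn : (0 : R) <= n%:R by [].
have hD : Dv R s t = 4 * s%:R ^+ 2 + 4 * s%:R + (t%:R + 1 / 2) ^+ 2 by [].
have hnt' : n%:R + 1 <= t%:R :> R by rewrite natr1 ler_nat.
have hns' : n%:R + 1 <= 2 * s%:R :> R by rewrite natr1 -natrM ler_nat.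
move: h; rewrite /cv => h.
have hq : Dv R s t > (2 * s%:R + t%:R + 3 / 2 - n%:R) ^+ 2 by rewrite -hy2; nra.
rewrite -(ler_nat R) !natrM !natrB ?(ltnW hnt) ?(ltnW hns) // ?natrX ?natrM.
nra.
Qed.

Lemma x_pos (R : realType) (s t : nat) : 0 < xval R s t.
Proof.
rewrite xvalE.
have [hy hy2] := sqrtD_facts R s t; set y := Num.sqrt (Dv R s t) in hy hy2 *.
have hs : (0 : R) <= s%:R by [].
have ht : (0 : R) <= t%:R by [].
have hD : Dv R s t = 4 * s%:R ^+ 2 + 4 * s%:R + (t%:R + 1 / 2) ^+ 2 by [].
have hq : y ^+ 2 < (2 * s%:R + t%:R + 3 / 2) ^+ 2 by rewrite hy2 hD; nra.
rewrite /cv subr_gt0; apply: sq_lt => //; nra.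
Qed.


End Reals.

Section Main.
Local Open Scope ring_scope.

Lemma up_chain (F : int -> nat) (g : int) :
  (forall N, N < g -> (F N <= F (N + 1)%R)%N) ->
  forall a b, a <= b -> b <= g -> (F a <= F b)%N.
Proof.
move=> H a b hab hbg.
have [k hk] : exists k : nat, b = a + k%:Z.
  by exists `|b - a|%N; rewrite gez0_abs ?subr_ge0 //; ring.
subst b; elim: k hbg {hab} => [|k IH] hbg; first by rewrite addr0.
have e : a + k.+1%:Z = (a + k%:Z) + 1 by rewrite -[k.+1]addn1 PoszD addrA.
rewrite e in hbg *.
apply: (leq_trans (IH _)); first lia.
apply: H; lia.
Qed.

Lemma down_chain (F : int -> nat) (g : int) :
  (forall N, g <= N -> (F (N + 1)%R <= F N)%N) ->
  forall a b, g <= a -> a <= b -> (F b <= F a)%N.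
Proof.
move=> H a b hga hab.
have [k hk] : exists k : nat, b = a + k%:Z.
  by exists `|b - a|%N; rewrite gez0_abs ?subr_ge0 //; ring.
subst b; elim: k {hab} => [|k IH]; first by rewrite addr0.
have e : a + k.+1%:Z = (a + k%:Z) + 1 by rewrite -[k.+1]addn1 PoszD addrA.
rewrite e.
apply: (leq_trans _ IH).
apply: H; lia.
Qed.

Lemma main_aux (R : realType) (s1 s2 : nat) :
  (1 <= s1)%N ->
  exists g : int,
    (forall a b : int, (a <= b)%R -> (b <= g)%R -> (fss s1 s2 a <= fss s1 s2 b)%N) /\
    (forall a b : int, (g <= a)%R -> (a <= b)%R -> (fss s1 s2 b <= fss s1 s2 a)%N) /\
    exists delta : int, (delta = 0 \/ delta = 1) /\
      g = (Num.floor ((2 * s1%:R + s2%:R + 3 / 2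
             - Num.sqrt (4 * s1%:R ^+ 2 + 4 * s1%:R + (s2%:R + 1 / 2) ^+ 2)) : R)
           + delta)%R.
Proof.
move=> hs1.
set F := fss s1 s2.
set fl := Num.floor _.
have hfl : fl = Num.floor (xval R s1 s2) by [].
have SA' : forall N : int, (N + 1)%:~R <= xval R s1 s2 -> (F N <= F (N + 1)%R)%N.
  case=> [n|k] h; last by rewrite /F.
  have e : Posz n + 1 = Posz n.+1 by rewrite -[n.+1]addn1 PoszD.
  rewrite e in h *.
  have [h1 h2 h3] := @RA R s1 s2 hs1 n h.
  exact: stepA.
have SB' : forall N : int, xval R s1 s2 < N%:~R -> (F (N + 1)%R <= F N)%N.
  case=> [n|k] h.
    have e : Posz n + 1 = Posz n.+1 by rewrite -[n.+1]addn1 PoszD.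
    rewrite e /F.
    case: (ltnP n s2) => hn; first exact: (stepB hn (@RB R s1 s2 n h hn)).
    by rewrite fss_big.
  exfalso.
  have hx := @x_pos R s1 s2.
  have hk : (Negz k)%:~R < (0 : R) by rewrite ltrz0.
  by have := lt_trans hx (lt_trans h hk); rewrite ltxx.
have hfl1 : fl%:~R <= xval R s1 s2 by rewrite hfl floor_le.
have hfl2 : xval R s1 s2 < (fl + 1)%:~R by rewrite hfl floorD1_gt.
case: (leqP (F fl) (F (fl + 1)%R)) => hc.
- exists (fl + 1); split; [|split; last by exists 1; split; [right|]].
  + apply: up_chain => N hN.
    case: (ltP N fl) => hN2.
      apply: SA'; apply: le_trans hfl1; rewrite ler_int; lia.
    have -> : N = fl by lia.
    exact: hc.
  + apply: down_chain => N hN.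
    apply: SB'; apply: (lt_le_trans hfl2); rewrite ler_int; lia.
- exists fl; split; [|split; last by exists 0; split; [left|rewrite addr0]].
  + apply: up_chain => N hN.
    apply: SA'; apply: le_trans hfl1; rewrite ler_int; lia.
  + apply: down_chain => N hN.
    case: (ltP fl N) => hN2.
      apply: SB'; apply: (lt_le_trans hfl2); rewrite ler_int; lia.
    have -> : N = fl by lia.
    exact: ltnW.
Qed.

End Main.

Unset Implicit Arguments.

Theorem theorem1p1 (R : realType) (s1 s2 : nat) :
  (1 <= s1)%N ->
  exists g : int,
    (forall a b : int, (a <= b)%R -> (b <= g)%R -> (fss s1 s2 a <= fss s1 s2 b)%N) /\
    (forall a b : int, (g <= a)%R -> (a <= b)%R -> (fss s1 s2 b <= fss s1 s2 a)%N) /\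
    exists delta : int, (delta = 0 \/ delta = 1) /\
      g = (Num.floor ((2 * s1%:R + s2%:R + 3 / 2
             - Num.sqrt (4 * s1%:R ^+ 2 + 4 * s1%:R + (s2%:R + 1 / 2) ^+ 2)) : R)
           + delta)%R.
Proof. exact: (@main_aux R s1 s2). Qed.
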